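(* Let $(R,\mathfrak m)$ be a Noetherian local ring, let $I\subseteq R$ be an ideal and let $J=(f_1,\ldots,f_t)\subseteq I$ with $\nu_I(f_i)=1$ for $i=1,\ldots,t$. Consider the complex of graded $\mathrm{gr}_I(R)$-modules $$0\to \mathrm{gr}(\mathcal Z)\xrightarrow{\mathrm{gr}(i)}\mathrm{gr}(R^t)\xrightarrow{\mathrm{gr}(\mathfrak f)}\mathrm{gr}_I(R)\xrightarrow{\mathrm{gr}(\pi)}\mathrm{gr}_{I/J}(R/J)\to 0 \qquad ( * )$$ described in the context. The following are equivalent: (a) the natural surjection $\mathcal A_{R/J}(I/J)\to \mathcal R_{R/J}(I/J)$ is an isomorphism, i.e. $J\cap I^n=JI^{n-1}$ for all $n\ge 1$; (b) the complex $( * )$ is exact; (c) there exists a homogeneous system of generators of $\mathrm{Syz}(f_1^*,\ldots,f_t^* )$ each of whose elements is of the form $(\varphi\circ\psi)(a)$ for some $a\in\mathcal Z$.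
   Context: For $f\in R$, $\nu_I(f)$ is the largest $n$ with $f\in I^n$ ($\infty$ if none), and $f^*$ is the class of $f$ in $I^{\nu_I(f)}/I^{\nu_I(f)+1}\subseteq \mathrm{gr}_I(R)=\bigoplus_{n\ge0}I^n/I^{n+1}$ (with $f^*=0$ if $\nu_I(f)=\infty$). The Aluffi algebra is $\mathcal A_{R/J}(I/J)=\bigoplus_{n\ge0}I^n/JI^{n-1}$ (with $I^0=R$, $JI^{-1}:=J$ in degree 0), the Rees algebra is $\mathcal R_{R/J}(I/J)=\bigoplus_{n\ge0}I^n/(J\cap I^n)$, and the natural surjection is induced by identity on $I^n$. Let $\mathfrak f:R^t\to R$, $(a_1,\ldots,a_t)\mapsto\sum a_if_i$, let $\mathcal Z=\ker\mathfrak f$ (first syzygy module of $f_1,\dots,f_t$), $i:\mathcal Z\hookrightarrow R^t$ the inclusion and $\pi:R\to R/J$ the projection. Filter $R$ by $I^n$, $R^t$ by $F_nR^t=(I^{n-1})^{\oplus t}$ (with $I^{m}=R$ for $m\le 0$), $\mathcal Z$ by $F_n\mathcal Z=\mathcal Z\cap F_nR^t$, and $R/J$ by $(I/J)^n$. The associated graded modules are $\mathrm{gr}(M)=\bigoplus_n F_nM/F_{n+1}M$; $\mathrm{gr}(R^t)\cong\mathrm{gr}_I(R)(-1)^t$, $\mathrm{gr}(\mathfrak f)$ sends the $i$-th basis vector $e_i$ to $f_i^*$, $\mathrm{gr}(i)$ is induced by inclusion and $\mathrm{gr}(\pi)$ is the natural surjection. $\mathrm{Syz}(f_1^*,\dots,f_t^*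 )=\ker \mathrm{gr}(\mathfrak f)$. For $0\neq a=(a_1,\ldots,a_t)\in\mathcal Z$ with $m-1=\min_j\nu_I(a_j)$, $\psi(a)$ is the class of $a$ in $F_m\mathcal Z/F_{m+1}\mathcal Z$, and $\varphi:\mathrm{gr}(\mathcal Z)\hookrightarrow \mathrm{Syz}(f_1^*,\ldots,f_t^* )$ is the canonical embedding, so that $(\varphi\circ\psi)(a)=(\overline{a_1},\ldots,\overline{a_t})$ with $\overline{a_i}$ the class of $a_i$ in $I^{m-1}/I^m$. *)

(* Defs.v *)
(* Ideals of a commutative ring are represented as
   Prop-valued predicates R -> Prop; R^t as functions 'I_t -> R. *)
From HB Require Import structures.
From mathcomp Require Import all_boot all_order all_algebra.
Set Implicit Arguments. Unset Strict Implicit. Unset Printing Implicit Defensive.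
Import Order.TTheory GRing.Theory Num.Theory.
Local Open Scope ring_scope.

Section Defs.
Variable R : comNzRingType.

Definition is_ideal (A : R -> Prop) : Prop :=
  [/\ A 0, (forall x y, A x -> A y -> A (x + y)) & (forall r x, A x -> A (r * x))].

Definition gen_ideal (t : nat) (f : 'I_t -> R) (x : R) : Prop :=
  exists c : 'I_t -> R, x = \sum_(i < t) c i * f i.

Definition prod_ideal (A B : R -> Prop) (x : R) : Prop :=
  exists s : seq (R * R),
    (forall p, p \in s -> A p.1 /\ B p.2) /\ x = \sum_(p <- s) p.1 * p.2.

Fixpoint ipow (I : R -> Prop) (n : nat) : R -> Prop :=
  match n with
  | 0%N => fun _ => True
  | n'.+1 => prod_ideal I (ipow I n')
  end.

Definition is_maximal_ideal (M : R -> Prop) : Prop :=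
  [/\ is_ideal M, ~ M 1 &
     forall A, is_ideal A -> (forall x, M x -> A x) ->
       (forall x, A x <-> M x) \/ A 1].

Definition local_ring : Prop :=
  exists M, is_maximal_ideal M /\
    forall M', is_maximal_ideal M' -> forall x, M' x <-> M x.

Definition noetherian_ring : Prop :=
  forall A, is_ideal A ->
    exists (k : nat) (g : 'I_k -> R), forall x, A x <-> gen_ideal g x.

Definition nu_eq (I : R -> Prop) (x : R) (n : nat) : Prop :=
  ipow I n x /\ ~ ipow I n.+1 x.

Variable t : nat.
Variable I : R -> Prop.
Variable f : 'I_t -> R.

Definition fmap (a : 'I_t -> R) : R := \sum_(i < t) a i * f i.
Definition syzZ (a : 'I_t -> R) : Prop := fmap a = 0.
(* F_n R^t = (I^(n-1))^t  (with I^(-1) = R: n.-1 is truncated) *)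
Definition FRt (n : nat) (a : 'I_t -> R) : Prop := forall i, ipow I n.-1 (a i).

Definition minnu (a : 'I_t -> R) (e : nat) : Prop :=
  (forall j, ipow I e (a j)) /\ exists j, ~ ipow I e.+1 (a j).

(* Degree-n exactness of the complex
   0 -> gr(Z) -> gr(R^t) -> gr_I(R) -> gr_{I/J}(R/J) -> 0,
   written on representatives (degree n piece of each module):
   gr(Z)_n = F_nZ/F_(n+1)Z, gr(R^t)_n = (I^(n-1)/I^n)^t, gr_I(R)_n = I^n/I^(n+1),
   gr_{I/J}(R/J)_n = (I/J)^n/(I/J)^(n+1) with (I/J)^n = (I^n + J)/J. *)
Definition exact_at_grZ (n : nat) : Prop :=
  forall a, syzZ a -> FRt n a ->
    (* gr(i)(class of a) = 0 *) FRt n.+1 a ->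
    (* class of a is zero in F_nZ/F_(n+1)Z *) syzZ a /\ FRt n.+1 a.

Definition exact_at_grRt (n : nat) : Prop :=
  forall b, FRt n b ->
    ((* gr(f)(class of b) = 0 in I^n/I^(n+1) *) ipow I n.+1 (fmap b) <->
     (* class of b is in the image of gr(i) *)
     exists a, [/\ syzZ a, FRt n a & FRt n.+1 (fun i => a i - b i)]).

Definition exact_at_grR (n : nat) : Prop :=
  forall x, ipow I n x ->
    ((* gr(pi)(class of x) = 0 *)
     (exists y j, [/\ ipow I n.+1 y, gen_ideal f j & x = y + j]) <->
     (* class of x is in the image of gr(f) *)
     exists b, FRt n b /\ ipow I n.+1 (x - fmap b)).

Definition exact_at_grRJ (n : nat) : Prop :=
  forall y, (exists x j, [/\ ipow I n x, gen_ideal f j & y = x + j]) ->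
    exists x, ipow I n x /\
      exists z j, [/\ ipow I n.+1 z, gen_ideal f j & y - x = z + j].

Definition complex_exact : Prop :=
  forall n, [/\ exact_at_grZ n, exact_at_grRt n, exact_at_grR n & exact_at_grRJ n].

(* (c): S is a set of elements a of Z, a <> 0, such that the homogeneous
   elements (phi o psi)(a) (of degree e+1 where e = min_j nu_I(a_j), with
   components the classes of a_j in I^e/I^(e+1)) generate Syz(f_1^star,...,f_t^star)
   as a gr_I(R)-module.  As the generators are homogeneous and Syz is graded,
   this means every homogeneous syzygy of degree d+1 (represented by b with
   b_i in I^d and sum b_i f_i in I^(d+2)) is a gr_I(R)-combination of them
   with homogeneous coefficients of degree d-e (classes of c in I^(d-e)). *)
Definition gr_syz_generated_by (S : ('I_t -> R) -> Prop) : Prop :=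
  (forall a, S a -> syzZ a /\ a <> (fun _ => 0)) /\
  forall (d : nat) (b : 'I_t -> R),
    (forall i, ipow I d (b i)) -> ipow I d.+2 (fmap b) ->
    exists (r : nat) (a : 'I_r -> 'I_t -> R) (e : 'I_r -> nat) (c : 'I_r -> R),
      (forall k, [/\ S (a k), minnu (a k) (e k), (e k <= d)%N & ipow I (d - e k) (c k)]) /\
      forall i, ipow I d.+1 (b i - \sum_(k < r) c k * a k i).

End Defs.

(* Main.v *)
Require Import Defs.
From HB Require Import structures.
From mathcomp Require Import all_boot all_order all_algebra.
From mathcomp Require Import ring.
From Stdlib Require Import Classical.
Import GRing.Theory.
Local Open Scope ring_scope.
Set Implicit Arguments. Unset Strict Implicit.

Lemma ideal_sum (R : comNzRingType) (A : R -> Prop) (HA : is_ideal A)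
  (J : Type) (s : seq J) (P : pred J) (F : J -> R) :
  (forall i, P i -> A (F i)) -> A (\sum_(i <- s | P i) F i).
Proof. case: HA => H0 HD HM Hi; exact: (big_ind A). Qed.

Lemma ideal_opp (R : comNzRingType) (A : R -> Prop) x :
  is_ideal A -> A x -> A (- x).
Proof. case=> _ _ HM Hx; rewrite -mulN1r; exact: HM. Qed.

Lemma ideal_sub (R : comNzRingType) (A : R -> Prop) x y :
  is_ideal A -> A x -> A y -> A (x - y).
Proof. move=> HA Hx Hy; case: (HA) => _ HD _; apply: HD => //; exact: ideal_opp. Qed.

Lemma prod_ideal_ideal (R : comNzRingType) (A B : R -> Prop) :
  is_ideal A -> is_ideal (prod_ideal A B).
Proof.
case=> _ _ HM; split.
- by exists [::]; rewrite big_nil.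
- move=> x y [s1 [H1 ->]] [s2 [H2 ->]]; exists (s1 ++ s2); split; last by rewrite big_cat.
  by move=> p; rewrite mem_cat => /orP [] ?; [apply: H1|apply: H2].
- move=> r x [s [Hs ->]]; exists [seq (r * p.1, p.2) | p <- s]; split.
  + move=> p /mapP [q Hq ->] /=; case: (Hs q Hq) => ??; split => //; exact: HM.
  + by rewrite big_map big_distrr /=; apply: eq_bigr => p _; rewrite mulrA.
Qed.

Lemma ipow_ideal (R : comNzRingType) (I : R -> Prop) n :
  is_ideal I -> is_ideal (ipow I n).
Proof. move=> HI; case: n => [|n] /=; first by split. exact: prod_ideal_ideal. Qed.

Lemma prod_ideal_sub (R : comNzRingType) (A B C : R -> Prop) x :
  is_ideal C -> (forall a b, A a -> B b -> C (a * b)) -> prod_ideal A B x -> C x.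
Proof.
move=> HC H [s [Hs ->]]; rewrite big_seq; apply: ideal_sum => // p Hp.
case: (Hs p Hp) => ??; exact: H.
Qed.

Lemma ipow_S (R : comNzRingType) (I : R -> Prop) n x :
  is_ideal I -> ipow I n.+1 x -> ipow I n x.
Proof.
move=> HI; apply: prod_ideal_sub; first exact: ipow_ideal.
move=> a b _ Hb; case: (@ipow_ideal _ _ n HI) => _ _ HM; exact: HM.
Qed.

Lemma ipow_le (R : comNzRingType) (I : R -> Prop) m n x :
  is_ideal I -> (m <= n)%N -> ipow I n x -> ipow I m x.
Proof.
move=> HI; elim: n => [|n IH]; first by rewrite leqn0 => /eqP ->.
rewrite leq_eqVlt => /orP [/eqP -> //|]; rewrite ltnS => Hm Hx.
by apply: IH => //; apply: ipow_S.
Qed.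

Lemma ipow_mul (R : comNzRingType) (I : R -> Prop) m n x y :
  is_ideal I -> ipow I m x -> ipow I n y -> ipow I (m + n) (x * y).
Proof.
move=> HI; elim: m x => [|m IH] x Hx Hy.
  by rewrite add0n; case: (@ipow_ideal _ _ n HI) => _ _ HM; exact: HM.
rewrite addSn; case: Hx => s [Hs ->].
exists [seq (p.1, p.2 * y) | p <- s]; split.
- move=> p /mapP [q Hq ->] /=; case: (Hs q Hq) => ??; split => //; exact: IH.
- by rewrite big_map big_distrl /=; apply: eq_bigr => p _; rewrite mulrA.
Qed.

Lemma I_ipow1 (R : comNzRingType) (I : R -> Prop) x : I x -> ipow I 1 x.
Proof.
move=> Hx; exists [:: (x, 1)]; split; last by rewrite big_cons big_nil mulr1 addr0.
by move=> p; rewrite inE => /eqP ->.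
Qed.

Lemma ipow0 (R : comNzRingType) (I : R -> Prop) n : is_ideal I -> ipow I n 0.
Proof. by move=> HI; case: (@ipow_ideal _ _ n HI). Qed.

Section F.
Variables (R : comNzRingType) (t : nat) (I : R -> Prop) (f : 'I_t -> R).

Lemma fmapB a b : fmap f (fun i => a i - b i) = fmap f a - fmap f b.
Proof. by rewrite /fmap -sumrB; apply: eq_bigr => i _; rewrite mulrBl. Qed.

Lemma fmap0 : fmap f (fun _ => 0) = 0.
Proof. by rewrite /fmap big1 // => i _; rewrite mul0r. Qed.

Lemma fmap_ipow k b : is_ideal I -> (forall i, I (f i)) ->
  (forall i, ipow I k (b i)) -> ipow I k.+1 (fmap f b).
Proof.
move=> HI Hf Hb; apply: ideal_sum; first exact: ipow_ideal.
move=> i _; rewrite -addn1; apply: ipow_mul => //; exact: I_ipow1.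
Qed.

Lemma prodJ_fmap k x : is_ideal I ->
  prod_ideal (gen_ideal f) (ipow I k) x ->
  exists b, (forall i, ipow I k (b i)) /\ x = fmap f b.
Proof.
move=> HI [s [Hs ->]]; elim: s Hs => [|p s IH] Hs.
  by exists (fun _ => 0); split => [i|]; [exact: ipow0|rewrite big_nil fmap0].
rewrite big_cons; case: IH => [q Hq|b [Hb ->]]; first by apply: Hs; rewrite inE Hq orbT.
case: (Hs p); first by rewrite inE eqxx.
move=> [c Hc] Hp2.
exists (fun i => c i * p.2 + b i); split.
- move=> i; case: (@ipow_ideal _ _ k HI) => _ HD HM; apply: HD => //; exact: HM.
- rewrite Hc /fmap mulr_suml -big_split /=; apply: eq_bigr => i _.
  by rewrite mulrDl; congr (_ + _); rewrite mulrAC.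
Qed.

Lemma fmap_prodJ k b : (forall i, ipow I k (b i)) ->
  prod_ideal (gen_ideal f) (ipow I k) (fmap f b).
Proof.
move=> Hb; exists [seq (f i, b i) | i <- index_enum 'I_t]; split.
- move=> p /mapP [i _ ->] /=; split => //.
  exists (fun j => (j == i)%:R); rewrite (bigD1 i) //= eqxx mul1r big1 ?addr0 //.
  by move=> j /negbTE ->; rewrite mul0r.
- by rewrite big_map /fmap; apply: eq_bigr => i _ /=; rewrite mulrC.
Qed.

Lemma gen_ideal_I x : is_ideal I -> (forall i, I (f i)) -> gen_ideal f x -> I x.
Proof.
move=> HI Hf [c ->]; apply: ideal_sum => // i _.
case: HI => _ _ HM; exact: HM.
Qed.

End F.

Definition Prt (R : comNzRingType) (t : nat) (I : R -> Prop) (f : 'I_t -> R) : Prop :=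
  forall n b, FRt I n b -> ipow I n.+1 (fmap f b) ->
    exists a, [/\ syzZ f a, FRt I n a & FRt I n.+1 (fun i => a i - b i)].

Theorem theorem1p4 (R : comNzRingType) (t : nat) (I : R -> Prop) (f : 'I_t -> R) :
  noetherian_ring R -> local_ring R ->
  is_ideal I ->
  (* J = (f_1,...,f_t) is contained in I and nu_I(f_i) = 1 *)
  (forall i, I (f i)) ->
  (forall i, nu_eq I (f i) 1) ->
  (* (a): J cap I^n = J I^(n-1) for all n >= 1 *)
  let cond_a := forall n : nat, (1 <= n)%N -> forall x,
          (gen_ideal f x /\ ipow I n x) <-> prod_ideal (gen_ideal f) (ipow I n.-1) x in
  (* (b): the complex ( * ) is exact *)
  let cond_b := complex_exact I f in
  (* (c): Syz(f_1^star,...,f_t^star) has a homogeneous generating system of elements (phi o psi)(a), a in Z *)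
  let cond_c := exists S, gr_syz_generated_by I f S in
  (cond_a <-> cond_b) /\ (cond_b <-> cond_c).
Proof.
move=> _ _ HI Hf _ cond_a cond_b cond_c.
have zsyz : syzZ f (fun _ => 0) by rewrite /syzZ fmap0.
have aP : Prt I f -> cond_a.
  move=> HP n n1 x; split.
  - move=> [[c Hc] Hx].
    have key : forall k, (k <= n.-1)%N ->
        exists b, (forall i, ipow I k (b i)) /\ x = fmap f b.
      elim=> [|k IH] Hk; first by exists c.
      case: IH; first exact: ltnW.
      move=> b [Hb Hxb].
      case: (HP k.+1 b Hb).
        rewrite -Hxb; apply: (ipow_le HI _ Hx); rewrite -ltnS prednK // in Hk.
      move=> a [Ha _ Hab]; exists (fun i => b i - a i); split.
      + by move=> i; rewrite -opprB; apply: ideal_opp; [exact: ipow_ideal|exact: Hab].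
      + by rewrite fmapB -Hxb Ha subr0.
    case: (key n.-1 (leqnn _)) => b [Hb ->]; exact: fmap_prodJ.
  - move=> Hx; case: (prodJ_fmap HI Hx) => b [Hb ->]; split; first by exists b.
    by rewrite -(prednK n1); apply: fmap_ipow.
have Pa : cond_a -> Prt I f.
  move=> Ha [|d] b Hb Hfb.
    by exists (fun _ => 0); split.
  have Hj : gen_ideal f (fmap f b) by exists b.
  case: ((Ha d.+2 isT (fmap f b)).1 (conj Hj Hfb)) => s Hs.
  case: (prodJ_fmap HI (ex_intro _ s Hs)) => b' [Hb' Hbb'].
  exists (fun i => b i - b' i); split.
  - by rewrite /syzZ fmapB -Hbb' subrr.
  - move=> i; apply: ideal_sub; [exact: ipow_ideal|exact: Hb|apply: ipow_S => //; exact: Hb'].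
  - move=> i; have -> : b i - b' i - b i = - b' i by ring.
    apply: ideal_opp; [exact: ipow_ideal|exact: Hb'].
have rt_back : forall n b a, syzZ f a -> FRt I n a -> FRt I n.+1 (fun i => a i - b i) ->
    ipow I n.+1 (fmap f b).
  move=> n b a Ha _ Hab.
  have -> : fmap f b = - fmap f (fun i => a i - b i) by rewrite fmapB Ha sub0r opprK.
  apply: ideal_opp; first exact: ipow_ideal.
  exact: fmap_ipow.
have Pb : cond_b -> Prt I f.
  move=> Hb n b H1 H2; case: (Hb n) => _ Hrt _ _; exact: (Hrt b H1).1.
have bP : cond_a -> cond_b.
  move=> Ha; have HP := Pa Ha; move=> n; split.
  - by move=> a *; split.
  - move=> b Hb; split; first exact: HP.
    by case=> a [? ? ?]; apply: (rt_back n b a).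
  - move=> x Hx; split.
    + case=> y [j [Hy [c Hc] Hxe]].
      case: n Hx Hy Hxe => [|d] Hx Hy Hxe.
        by exists c; split => //; rewrite Hxe Hc addrK.
      have Hjd : ipow I d.+1 j.
        have -> : j = x - y by rewrite Hxe; ring.
        apply: ideal_sub => //; [exact: ipow_ideal|exact: ipow_S].
      have Hj : gen_ideal f j by exists c.
      case: (prodJ_fmap HI ((Ha d.+1 isT j).1 (conj Hj Hjd))) => b [Hb Hjb].
      exists b; split => //.
      by rewrite Hxe -Hjb addrK.
    + case=> b [Hb Hxb]; exists (x - fmap f b), (fmap f b); split => //.
      * by exists b.
      * by rewrite subrK.
  - move=> y [x [j [Hx Hj Hy]]]; exists x; split => //; exists 0, j; split => //.
    + exact: ipow0.
    + by rewrite Hy; ring.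
have Pc : Prt I f -> cond_c.
  move=> HP; exists (fun a => syzZ f a /\ a <> (fun _ => 0)); split; first by [].
  move=> d b Hb Hfb; case: (HP d.+1 b Hb Hfb) => a [Ha HaF Hab].
  case: (classic (forall j, ipow I d.+1 (a j))) => Hall.
    exists 0%N, (fun _ => a), (fun _ => 0%N), (fun _ => 0); split.
      by move=> k; have := ltn_ord k; rewrite ltn0.
    move=> i; rewrite big_ord0 subr0.
    have -> : b i = a i - (a i - b i) by ring.
    apply: ideal_sub; [exact: ipow_ideal|exact: Hall|exact: Hab].
  case: (not_all_ex_not _ _ Hall) => j Hj.
  exists 1%N, (fun _ => a), (fun _ => d), (fun _ => 1); split.
    move=> k; split => //.
    + split => // Ha0; apply: Hj; rewrite Ha0; exact: ipow0.
    + by split => //; exists j.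
    + by rewrite subnn.
  move=> i; rewrite big_ord1 mul1r -opprB.
  apply: ideal_opp; [exact: ipow_ideal|exact: Hab].
have cP : cond_c -> Prt I f.
  case=> S [HS Hgen] [|d] b Hb Hfb.
    by exists (fun _ => 0); split.
  case: (Hgen d b Hb Hfb) => r [a [e [c [Hk Hi]]]].
  exists (fun i => \sum_(k < r) c k * a k i); split.
  - rewrite /syzZ /fmap.
    rewrite (eq_bigr (fun i => \sum_(k < r) c k * (a k i * f i))); last first.
      by move=> i _; rewrite mulr_suml; apply: eq_bigr => k _; rewrite mulrA.
    rewrite exchange_big big1 // => k _; rewrite -mulr_sumr.
    case: (Hk k) => HSk _ _ _; case: (HS _ HSk) => Hz _.
    by rewrite /syzZ /fmap in Hz; rewrite Hz mulr0.
  - move=> i; apply: ideal_sum; first exact: ipow_ideal.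
    move=> k _; case: (Hk k) => _ [Hmin _] Hle Hc.
    rewrite -(subnK Hle); exact: ipow_mul.
  - move=> i; rewrite -opprB; apply: ideal_opp; [exact: (@ipow_ideal _ _ d.+1 HI)|exact: Hi].
split; split.
- exact: bP.
- by move=> Hb; apply: aP; apply: Pb.
- by move=> Hb; apply: Pc; apply: Pb.
- by move=> Hc; apply: bP; apply: aP; apply: cP.
Qed.
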